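(* Let $\mathcal{B}$ be a Borel-measurable partition of $\Omega$ with $\underline{P}(B)>0$ for all $B\in\mathcal{B}$, and let $A\in\mathscr{B}(\Omega)$. If $\mathcal{B}$ dilates (respectively strictly dilates) $A$ under either Dempster's rule or the Geometric rule, then $\mathcal{B}$ dilates (respectively strictly dilates) $A$ under the generalized Bayes rule.
   Context: $\Omega$ is a separable, completely metrizable space with Borel $\sigma$-algebra $\mathscr{B}(\Omega)$; $\underline{P}$ is a Choquet capacity of order 2 on $\mathscr{B}(\Omega)$ (a coherent lower probability with weakly compact set of dominating measures satisfying $\underline{P}(A\cup B)\ge\underline{P}(A)+\underline{P}(B)-\underline{P}(A\cap B)$); $\Pi=\{P:P\ge\underline{P}\}$, $\underline{P}(A)=\inf_{P\in\Pi}P(A)$, $\overline{P}(A)=\sup_{P\in\Pi}P(A)=1-\underline{P}(A^c)$. Generalized Bayes rule: $\underline{P}_{\mathfrak{B}}(A\mid B)=\inf_{P\in\Pi}P(A\cap B)/P(B)$, $\overline{P}_{\mathfrak{B}}(A\mid B)=\sup_{P\in\Pi}P(A\cap B)/P(B)$. Dempster's rule: $\overline{P}_{\mathfrak{D}}(A\mid B)=\overline{P}(A\cap B)/\overline{P}(B)$, $\underline{P}_{\mathfrak{D}}(A\mid B)=1-\overline{P}_{\mathfrak{D}}(A^c\mid B)$. Geometric rule: $\underline{P}_{\mathfrak{G}}(A\mid B)=\underline{P}(A\cap B)/\underline{P}(B)$, $\overline{P}_{\mathfrak{G}}(A\mid B)=1-\underline{P}_{\mathfrak{G}}(A^c\mid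 B)$. For a rule with conditional lower/upper probabilities $\underline{P}_\bullet,\overline{P}_\bullet$, $\mathcal{B}$ strictly dilates $A$ if $\sup_{B\in\mathcal{B}}\underline{P}_\bullet(A\mid B)<\underline{P}(A)\le\overline{P}(A)<\inf_{B\in\mathcal{B}}\overline{P}_\bullet(A\mid B)$; $\mathcal{B}$ dilates $A$ if this holds with either (but not both) outer strict inequality allowed to be an equality. *)

(* Defs.v *)
From HB Require Import structures.
From mathcomp Require Import all_boot all_order all_algebra.
From mathcomp Require Import all_classical all_reals all_analysis.
Import Order.TTheory GRing.Theory Num.Theory.
Import numFieldNormedType.Exports.

Set Implicit Arguments.
Unset Strict Implicit.
Unset Printing Implicit Defensive.

Local Open Scope classical_set_scope.
Local Open Scope ring_scope.

Notation Borel T := (g_sigma_algebraType (@open T)).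

Section ImpreciseProbability.
Variables (R : realType) (T : completePseudoMetricType R).

Definition pr (P : probability (Borel T) R) (A : set (Borel T)) : R := fine (P A).

Definition pint (P : probability (Borel T) R) (f : T -> R) : R :=
  fine (\int[P]_x (f x)%:E).

Definition bounded_continuous (f : T -> R) : Prop :=
  continuous f /\ exists M : R, forall x, `|f x| <= M.

(* Basic neighbourhoods of P for the weak topology on probability measures
   (the coarsest topology making Q |-> \int f dQ continuous for every
   bounded continuous f). *)
Definition weak_nbhs (P : probability (Borel T) R)
    (N : set (probability (Borel T) R)) : Prop :=
  exists (fs : seq (T -> R)) (e : R), 0 < e /\
    (forall f, f \in fs -> bounded_continuous f) /\
    [set Q | forall f, f \in fs -> `|pint Q f - pint P f| < e] `<=` N.

Definition weakly_compact (K : set (probability (Borel T) R)) : Prop :=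
  forall F : set_system (probability (Borel T) R), ProperFilter F -> F K ->
    exists2 P, K P & forall N S, weak_nbhs P N -> F S -> (S `&` N) !=set0.

Definition core (lP : set (Borel T) -> R) : set (probability (Borel T) R) :=
  [set P | forall A, measurable A -> lP A <= pr P A].

Definition upperP (lP : set (Borel T) -> R) (A : set (Borel T)) : R :=
  sup [set pr P A | P in core lP].

(* Choquet capacity of order 2: coherent lower probability (lower envelope
   of its nonempty core), with weakly compact core, and 2-monotone. *)
Definition choquet2 (lP : set (Borel T) -> R) : Prop :=
  [/\ core lP !=set0,
      (forall A, measurable A -> lP A = inf [set pr P A | P in core lP]),
      weakly_compact (core lP) &
      (forall A B, measurable A -> measurable B ->
         lP (A `|` B) >= lP A + lP B - lP (A `&` B))].

Definition borel_partition (BB : set (set (Borel T))) : Prop :=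
  [/\ (forall B, BB B -> measurable B),
      (forall B C, BB B -> BB C -> B <> C -> B `&` C = set0) &
      \bigcup_(B in BB) B = setT].

Definition GB_low (lP : set (Borel T) -> R) (A B : set (Borel T)) : R :=
  inf [set pr P (A `&` B) / pr P B | P in core lP].
Definition GB_up (lP : set (Borel T) -> R) (A B : set (Borel T)) : R :=
  sup [set pr P (A `&` B) / pr P B | P in core lP].

Definition D_up (lP : set (Borel T) -> R) (A B : set (Borel T)) : R :=
  upperP lP (A `&` B) / upperP lP B.
Definition D_low (lP : set (Borel T) -> R) (A B : set (Borel T)) : R :=
  1 - D_up lP (~` A) B.

Definition G_low (lP : set (Borel T) -> R) (A B : set (Borel T)) : R :=
  lP (A `&` B) / lP B.
Definition G_up (lP : set (Borel T) -> R) (A B : set (Borel T)) : R :=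
  1 - G_low lP (~` A) B.

Definition strictly_dilates (lP : set (Borel T) -> R)
    (low up : set (Borel T) -> set (Borel T) -> R)
    (BB : set (set (Borel T))) (A : set (Borel T)) : Prop :=
  [/\ sup [set low A B | B in BB] < lP A,
      lP A <= upperP lP A &
      upperP lP A < inf [set up A B | B in BB]].

Definition dilates (lP : set (Borel T) -> R)
    (low up : set (Borel T) -> set (Borel T) -> R)
    (BB : set (set (Borel T))) (A : set (Borel T)) : Prop :=
  [/\ sup [set low A B | B in BB] <= lP A,
      lP A <= upperP lP A &
      upperP lP A < inf [set up A B | B in BB]] \/
  [/\ sup [set low A B | B in BB] < lP A,
      lP A <= upperP lP A &
      upperP lP A <= inf [set up A B | B in BB]].

End ImpreciseProbability.

(* Main.v *)
Require Import Defs.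
From HB Require Import structures.
From mathcomp Require Import all_boot all_order all_algebra.
From mathcomp Require Import all_classical all_reals all_analysis.
From mathcomp Require Import ring lra.
Import Order.TTheory GRing.Theory Num.Theory.
Import numFieldNormedType.Exports.
Local Open Scope classical_set_scope.
Local Open Scope ring_scope.

Lemma r1 (R : realType) (g q a b l : R) : 0 < l -> l <= b -> g <= q -> q * b = a -> 0 <= q -> g * l <= a.
Proof. move=> *; nra. Qed.
Lemma r2 (R : realType) (h q a b u : R) : 0 < u -> b <= u -> q <= h -> q * b = a -> 0 <= q -> a <= h * u.
Proof. move=> *; nra. Qed.
Lemma r3 (R : realType) (g q c b u : R) : 0 < b -> b <= u -> g <= q -> c = (1 - q) * b -> 0 <= c -> c <= (1 - g) * u.
Proof.
move=> b0 bu gq ce c0.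
have q1 : q <= 1.
  rewrite leNgt; apply/negP => q1; have : (1 - q) * b < 0 by rewrite pmulr_llt0 // subr_lt0.
  by rewrite -ce ltNge c0.
have h1 : 0 <= (q - g) * b by rewrite mulr_ge0 // ?subr_ge0 // ltW.
have h2 : 0 <= (1 - g) * (u - b) by rewrite mulr_ge0 // subr_ge0 // (le_trans gq).
nra.
Qed.
Lemma r4 (R : realType) (h q c b l : R) : 0 < l -> l <= b -> q <= h -> c = (1 - q) * b -> 0 <= c -> (1 - h) * l <= c.
Proof. move=> *; case: (lerP h 1) => ?; nra. Qed.

Section Aux.
Set Implicit Arguments.
Variables (R : realType) (T : completePseudoMetricType R).
Variable (lP : set (Borel T) -> R).
Hypothesis HlP : choquet2 lP.

Lemma prE (P : probability (Borel T) R) (X : set (Borel T)) :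
  measurable X -> (pr P X)%:E = P X.
Proof. by move=> mX; rewrite /pr fineK // fin_num_measure. Qed.

Lemma pr_ge0 (P : probability (Borel T) R) (X : set (Borel T)) : 0 <= pr P X.
Proof. by rewrite /pr fine_ge0. Qed.

Lemma pr_le1 (P : probability (Borel T) R) (X : set (Borel T)) :
  measurable X -> pr P X <= 1.
Proof. by move=> mX; rewrite -lee_fin prE // probability_le1. Qed.

Lemma pr_le (P : probability (Borel T) R) (X Y : set (Borel T)) :
  measurable X -> measurable Y -> X `<=` Y -> pr P X <= pr P Y.
Proof.
move=> mX mY XY; rewrite -lee_fin !prE //.
by apply: le_measure => //; rewrite inE.
Qed.

Lemma pr_split (P : probability (Borel T) R) (A B : set (Borel T)) :
  measurable A -> measurable B ->
  pr P B = pr P (A `&` B) + pr P (~` A `&` B).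
Proof.
move=> mA mB; apply/EFin_inj; rewrite EFinD !prE //;
  try by apply: measurableI => //; apply: measurableC.
rewrite -measureU //; try by apply: measurableI => //; apply: measurableC.
  by rewrite -setIUl setUv setTI.
by rewrite setIACA setICr set0I.
Qed.

Lemma core_ne : core lP !=set0.
Proof. by case: HlP. Qed.

Lemma uP_hasub X : measurable X -> has_ubound [set pr P X | P in core lP].
Proof. by move=> mX; exists 1 => _ [P _ <-]; exact: pr_le1. Qed.

Lemma uP_ge P X : measurable X -> core lP P -> pr P X <= upperP lP X.
Proof. by move=> mX cP; apply: ub_le_sup; [exact: uP_hasub | exists P]. Qed.

Lemma uP_le X c : (forall P, core lP P -> pr P X <= c) -> upperP lP X <= c.
Proof.
move=> H; apply: ge_sup.
  by case: core_ne => P cP; exists (pr P X), P.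
by move=> _ [P cP <-]; exact: H.
Qed.

Lemma uP_ge0 X : measurable X -> 0 <= upperP lP X.
Proof.
move=> mX; case: core_ne => P cP.
exact: le_trans (pr_ge0 P X) (uP_ge mX cP).
Qed.

Lemma lP_le P X : measurable X -> core lP P -> lP X <= pr P X.
Proof. by move=> mX cP; apply: cP. Qed.

Lemma lP_ge X c : measurable X ->
  (forall P, core lP P -> c <= pr P X) -> c <= lP X.
Proof.
move=> mX H; case: HlP => _ -> // _ _; apply: lb_le_inf.
  by case: core_ne => P cP; exists (pr P X), P.
by move=> _ [P cP <-]; exact: H.
Qed.

Lemma lP_ge0 X : measurable X -> 0 <= lP X.
Proof. by move=> mX; apply: lP_ge => // P _; exact: pr_ge0. Qed.

Lemma lP_mono X Y : measurable X -> measurable Y -> X `<=` Y -> lP X <= lP Y.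
Proof.
move=> mX mY XY; apply: lP_ge => // P cP.
exact: le_trans (lP_le mX cP) (pr_le P mX mY XY).
Qed.

Lemma core_pos P B : measurable B -> 0 < lP B -> core lP P -> 0 < pr P B.
Proof. by move=> mB lB cP; exact: lt_le_trans lB (lP_le mB cP). Qed.

Lemma GB_low_le P A B : measurable A -> measurable B -> 0 < lP B ->
  core lP P -> GB_low lP A B <= pr P (A `&` B) / pr P B.
Proof.
move=> mA mB lB cP; apply: ge_inf; last by exists P.
by exists 0 => _ [Q _ <-]; rewrite divr_ge0 // pr_ge0.
Qed.

Lemma ratio_le1 P A B : measurable A -> measurable B -> 0 < lP B ->
  core lP P -> pr P (A `&` B) / pr P B <= 1.
Proof.
move=> mA mB lB cP; have bp := core_pos mB lB cP.
rewrite ler_pdivrMr // mul1r; apply: pr_le => //.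
exact: measurableI.
Qed.

Lemma GB_up_ge P A B : measurable A -> measurable B -> 0 < lP B ->
  core lP P -> pr P (A `&` B) / pr P B <= GB_up lP A B.
Proof.
move=> mA mB lB cP; apply: ub_le_sup; last by exists P.
by exists 1 => _ [Q cQ <-]; exact: ratio_le1.
Qed.

Section PerB.
Variables (A B : set (Borel T)).
Hypotheses (mA : measurable A) (mB : measurable B) (lB : 0 < lP B).

Let mAB : measurable (A `&` B). Proof. exact: measurableI. Qed.
Let mCB : measurable (~` A `&` B).
Proof. by apply: measurableI => //; apply: measurableC. Qed.

Let uB_ge P : core lP P -> pr P B <= upperP lP B.
Proof. by move=> cP; apply: uP_ge. Qed.

Let uBpos : 0 < upperP lP B.
Proof.
case: core_ne => P cP.
exact: lt_le_trans (core_pos mB lB cP) (uB_ge cP).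
Qed.

Let qfacts P : core lP P ->
  let q := pr P (A `&` B) / pr P B in
  [/\ 0 < pr P B, q * pr P B = pr P (A `&` B), 0 <= q &
      pr P (~` A `&` B) = (1 - q) * pr P B].
Proof.
move=> cP q; have bp := core_pos mB lB cP.
have e : q * pr P B = pr P (A `&` B) by rewrite /q divfK // gt_eqF.
split => //; first by rewrite /q divr_ge0 // pr_ge0.
by rewrite mulrBl mul1r e (pr_split P mA mB); ring.
Qed.

Lemma ineq_G_low : GB_low lP A B <= G_low lP A B.
Proof.
rewrite /G_low ler_pdivlMr //; apply: lP_ge => // P cP.
have gq := GB_low_le mA mB lB cP; case: (qfacts cP) => bp e q0 _.
exact: r1 lB (lP_le mB cP) gq e q0.
Qed.

Lemma ineq_D_up : D_up lP A B <= GB_up lP A B.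
Proof.
rewrite /D_up ler_pdivrMr //; apply: uP_le => P cP.
have qh := GB_up_ge mA mB lB cP; case: (qfacts cP) => bp e q0 _.
exact: r2 uBpos (uB_ge cP) qh e q0.
Qed.

Lemma ineq_D_low : GB_low lP A B <= D_low lP A B.
Proof.
have H : upperP lP (~` A `&` B) <= (1 - GB_low lP A B) * upperP lP B.
  apply: uP_le => P cP.
  have gq := GB_low_le mA mB lB cP; case: (qfacts cP) => bp e q0 ec.
  exact: r3 bp (uB_ge cP) gq ec (pr_ge0 P _).
rewrite /D_low /D_up.
have : upperP lP (~` A `&` B) / upperP lP B <= 1 - GB_low lP A B.
  by rewrite ler_pdivrMr.
lra.
Qed.

Lemma ineq_G_up : G_up lP A B <= GB_up lP A B.
Proof.
have H : (1 - GB_up lP A B) * lP B <= lP (~` A `&` B).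
  apply: lP_ge => // P cP.
  have qh := GB_up_ge mA mB lB cP; case: (qfacts cP) => bp e q0 ec.
  exact: r4 lB (lP_le mB cP) qh ec (pr_ge0 P _).
rewrite /G_up /G_low.
have : 1 - GB_up lP A B <= lP (~` A `&` B) / lP B.
  by rewrite ler_pdivlMr.
lra.
Qed.

Lemma D_low_le1 : D_low lP A B <= 1.
Proof.
rewrite /D_low /D_up.
have : 0 <= upperP lP (~` A `&` B) / upperP lP B.
  by rewrite divr_ge0 // uP_ge0.
lra.
Qed.

Lemma G_low_le1 : G_low lP A B <= 1.
Proof.
by rewrite /G_low ler_pdivrMr // mul1r; apply: lP_mono.
Qed.

Lemma D_up_ge0 : 0 <= D_up lP A B.
Proof. by rewrite /D_up divr_ge0 // uP_ge0. Qed.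

Lemma G_up_ge0 : 0 <= G_up lP A B.
Proof.
rewrite /G_up.
have : G_low lP (~` A) B <= 1.
  by rewrite /G_low ler_pdivrMr // mul1r; apply: lP_mono.
lra.
Qed.

End PerB.

Lemma sup_mono (BB : set (set (Borel T))) (f g : set (Borel T) -> R) M :
  (forall B, BB B -> f B <= g B) -> (forall B, BB B -> g B <= M) ->
  sup [set f B | B in BB] <= sup [set g B | B in BB].
Proof.
move=> fg gM; case: (pselect (BB !=set0)) => [[B0 HB0]|H].
  apply: ge_sup; first by exists (f B0), B0.
  move=> _ [B HB <-]; apply: le_trans (fg _ HB) _.
  apply: ub_le_sup; last by exists B.
  by exists M => _ [C HC <-]; exact: gM.
have -> : BB = set0.
  by apply/seteqP; split => x // Hx; exfalso; apply: H; exists x.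
by rewrite !image_set0.
Qed.

Lemma inf_mono (BB : set (set (Borel T))) (f g : set (Borel T) -> R) M :
  (forall B, BB B -> f B <= g B) -> (forall B, BB B -> M <= f B) ->
  inf [set f B | B in BB] <= inf [set g B | B in BB].
Proof.
move=> fg gM; case: (pselect (BB !=set0)) => [[B0 HB0]|H].
  apply: lb_le_inf; first by exists (g B0), B0.
  move=> _ [B HB <-]; apply: le_trans _ (fg _ HB).
  apply: ge_inf; last by exists B.
  by exists M => _ [C HC <-]; exact: gM.
have -> : BB = set0.
  by apply/seteqP; split => x // Hx; exfalso; apply: H; exists x.
by rewrite !image_set0.
Qed.

Lemma transfer (BB : set (set (Borel T))) (HBB : borel_partition BB)
  (HBpos : forall B, BB B -> 0 < lP B) A (mA : measurable A) low up :
  (forall B, BB B -> GB_low lP A B <= low A B) ->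
  (forall B, BB B -> up A B <= GB_up lP A B) ->
  (forall B, BB B -> low A B <= 1) ->
  (forall B, BB B -> 0 <= up A B) ->
  sup [set GB_low lP A B | B in BB] <= sup [set low A B | B in BB] /\
  inf [set up A B | B in BB] <= inf [set GB_up lP A B | B in BB].
Proof.
move=> h1 h2 h3 h4; split; first exact: sup_mono h1 h3.
exact: inf_mono h2 h4.
Qed.

End Aux.

Theorem corollary5p6 (R : realType) (T : completePseudoMetricType R)
  (Thaus : hausdorff_space T)
  (Tsep : exists D : set T, countable D /\ dense D)
  (lP : set (Borel T) -> R) (HlP : choquet2 lP)
  (BB : set (set (Borel T))) (HBB : borel_partition BB)
  (HBpos : forall B, BB B -> 0 < lP B)
  (A : set (Borel T)) (mA : measurable A) :
  ((dilates lP (D_low lP) (D_up lP) BB A \/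
    dilates lP (G_low lP) (G_up lP) BB A) ->
   dilates lP (GB_low lP) (GB_up lP) BB A) /\
  ((strictly_dilates lP (D_low lP) (D_up lP) BB A \/
    strictly_dilates lP (G_low lP) (G_up lP) BB A) ->
   strictly_dilates lP (GB_low lP) (GB_up lP) BB A).
Proof.
have mBB : forall B, BB B -> measurable B by case: HBB.
have [D1 D2] : sup [set GB_low lP A B | B in BB] <= sup [set D_low lP A B | B in BB] /\
  inf [set D_up lP A B | B in BB] <= inf [set GB_up lP A B | B in BB].
  apply: transfer => // B HB; move: (mBB _ HB) (HBpos _ HB) => mB lB.
  - exact: ineq_D_low mA mB lB || exact: ineq_D_low mA mB.
  - exact: ineq_D_up mA mB lB || exact: ineq_D_up mA mB.
  - exact: D_low_le1 mA mB lB || exact: D_low_le1 mA mB.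
  - exact: D_up_ge0 mA mB lB || exact: D_up_ge0 mA mB.
have [G1 G2] : sup [set GB_low lP A B | B in BB] <= sup [set G_low lP A B | B in BB] /\
  inf [set G_up lP A B | B in BB] <= inf [set GB_up lP A B | B in BB].
  apply: transfer => // B HB; move: (mBB _ HB) (HBpos _ HB) => mB lB.
  - exact: ineq_G_low mA mB lB || exact: ineq_G_low mA mB.
  - exact: ineq_G_up mA mB lB || exact: ineq_G_up mA mB.
  - exact: G_low_le1 mA mB lB || exact: G_low_le1 mA mB.
  - exact: G_up_ge0 mA mB lB || exact: G_up_ge0 mA mB.
split.
  case=> [[[a b c]|[a b c]]|[[a b c]|[a b c]]].
  - by left; split => //; [exact: le_trans D1 a | exact: lt_le_trans c D2].
  - by right; split => //; [exact: le_lt_trans D1 a | exact: le_trans c D2].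
  - by left; split => //; [exact: le_trans G1 a | exact: lt_le_trans c G2].
  - by right; split => //; [exact: le_lt_trans G1 a | exact: le_trans c G2].
case=> [[a b c]|[a b c]].
- by split => //; [exact: le_lt_trans D1 a | exact: lt_le_trans c D2].
- by split => //; [exact: le_lt_trans G1 a | exact: lt_le_trans c G2].
Qed.
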